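(* Let $G$ be a finite group, $H\le G$ with $[G:H]=n$, $\pi:H\to A$ a homomorphism into an abelian group $A$, and $t_1,\dots,t_n$ representatives of the right cosets of $H$ in $G$ (so $G=\bigsqcup_i Ht_i$) with $1\in\{t_1,\dots,t_n\}$. Define $f:G\to A$ by $f(ht_i)=\pi(h)$ for $h\in H$. For $x\in G$ and each $i$, let $(i)x$ be the index with $t_ix\in Ht_{(i)x}$. Then: (i) $f^h=f$ for all $h\in H$, so $H\le \mathrm{Stab}_G(f)$; (ii) for all $x\in G$, $$\prod_{i=1}^n \pi\bigl(t_ixt_{(i)x}^{-1}\bigr)=\prod_{i=1}^n f^{t_i}(x)=\bigl(\overline f(x)\bigr)^m,\qquad m=[\mathrm{Stab}_G(f):H],$$ where $\overline f$ is the average function of $f$. In particular the transfer map $x\mapsto\prod_{i=1}^n \pi(t_ixt_{(i)x}^{-1})$ is a homomorphism $G\to A$.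
   Context: For a function $f:G\to A$ and $a\in G$, $f^a(x)=f(a)^{-1}f(ax)$. $\mathrm{Stab}_G(f)=\{a\in G: f^a=f\}$. The average function of $f:G\to A$ ($A$ abelian) is $\overline f(x)=\prod_{j} f^{g_j}(x)$, where $f^{g_1},\dots,f^{g_k}$ are the distinct elements of $\{f^g:g\in G\}$. *)

(* Defs.v *)
From HB Require Import structures.
From mathcomp Require Import all_boot all_order all_algebra all_fingroup.
Set Implicit Arguments. Unset Strict Implicit. Unset Printing Implicit Defensive.
Import GRing.Theory.
Local Open Scope ring_scope.

Section Defs.
Variables (gT : finGroupType) (A : zmodType).

(* f^a (x) = f(a)^{-1} f(a x), written additively *)
Definition fder (f : gT -> A) (a : gT) : gT -> A :=
  fun x => - f a + f (a * x)%g.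

Definition stab (G : {set gT}) (f : gT -> A) : {set gT} :=
  [set a in G | [forall x in G, fder f a x == f x]].

(* the restriction of a function to G, as a finite function (0 outside G),
   used to compare functions G -> A for equality *)
Definition restr (G : {set gT}) (f : gT -> A) : {ffun gT -> A} :=
  [ffun x => if x \in G then f x else 0].

(* average function: sum (= product, additively) of the distinct f^g, g in G *)
Definition avgf (G : {set gT}) (f : gT -> A) (x : gT) : A :=
  \sum_(F <- undup [seq restr G (fder f g) | g <- enum G]) F x.

End Defs.

(* Main.v *)
Require Import Defs.
From HB Require Import structures.
From mathcomp Require Import all_boot all_order all_algebra all_fingroup.
Import GRing.Theory.
Local Open Scope ring_scope.

Lemma fder_comp (gT : finGroupType) (A : zmodType) (f : gT -> A) a b x :
  fder (fder f a) b x = fder f (a * b)%g x.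
Proof.
rewrite /fder mulgA opprD opprK addrA; congr (_ + _).
by rewrite addrC addrA addNr add0r.
Qed.

Lemma fder_split (gT : finGroupType) (A : zmodType) (f : gT -> A) a x y :
  fder f a (x * y)%g = fder f a x + fder f (a * x)%g y.
Proof.
by rewrite /fder mulgA addrA addrK.
Qed.

Theorem mainTheorem6 (gT : finGroupType) (A : zmodType)
  (G H : {group gT}) (n : nat) (pi : gT -> A) (t : 'I_n -> gT)
  (f : gT -> A) (sigma : 'I_n -> gT -> 'I_n) :
  H \subset G ->
  #|G : H|%g = n ->
  {in H &, {morph pi : x y / (x * y)%g >-> x + y}} ->
  (forall i, t i \in G) ->
  injective (fun i => (H :* t i)%g) ->
  [set (H :* t i)%g | i : 'I_n] = rcosets H G ->
  (1%g \in [seq t i | i : 'I_n]) ->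
  (forall i, forall h, h \in H -> f (h * t i)%g = pi h) ->
  (forall i x, x \in G -> (t i * x)%g \in (H :* t (sigma i x))%g) ->
  (* (i) *)
  ((forall h, h \in H -> {in G, fder f h =1 f}) /\ H \subset stab G f) /\
  (* (ii) *)
  (forall x, x \in G ->
     \sum_(i < n) pi (t i * x * (t (sigma i x))^-1)%g
       = \sum_(i < n) fder f (t i) x
   /\ \sum_(i < n) fder f (t i) x = avgf G f x *+ #|stab G f : H|%g) /\
  (* in particular: the transfer is a homomorphism G -> A *)
  {in G &, {morph (fun x => \sum_(i < n) pi (t i * x * (t (sigma i x))^-1)%g)
              : x y / (x * y)%g >-> x + y}}.
Proof.
move=> sHG _ piM tG tinj tcov t1 fdef sig.
have pi1 : pi 1%g = 0.
  have := piM _ _ (group1 H) (group1 H); rewrite mulg1 => e.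
  apply: (addrI (pi 1%g)); by rewrite addr0 -e.
have f1 : f 1%g = 0.
  case/mapP: t1 => i0 _ e; by rewrite e -[t i0]mul1g fdef.
have cosG : forall z, z \in G -> exists2 h, h \in H & exists i, z = (h * t i)%g.
  move=> z zG.
  have : (H :* z)%g \in rcosets H G by apply/rcosetsP; exists z.
  rewrite -tcov => /imsetP [i _ e].
  have : z \in (H :* t i)%g by rewrite -e rcoset_refl.
  by case/rcosetP => h0 hH ->; exists h0 => //; exists i.
have fL : forall h z, h \in H -> z \in G -> f (h * z)%g = pi h + f z.
  move=> h z hH /cosG [h' h'H [i ->]].
  by rewrite mulgA !fdef ?groupM // piM.
have fH : forall h b y, h \in H -> b \in G -> y \in G ->
    fder f (h * b)%g y = fder f b y.
  move=> h b y hH bG yG; rewrite /fder -mulgA (fL h (b * y)%g) ?groupM // (fL h b) //.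
  by rewrite opprD addrACA addNr add0r.
have partI : forall h, h \in H -> {in G, fder f h =1 f}.
  move=> h hH x xG; rewrite -[h]mulg1 fH ?group1 //.
  by rewrite /fder mul1g f1 oppr0 add0r.
have stabP : forall a, reflect (a \in G /\ {in G, forall x, fder f a x = f x})
    (a \in stab G f).
  move=> a; rewrite inE; apply: (iffP andP) => [[aG /forallP Hf]|[aG Hf]]; split=> //.
    by move=> x xG; apply/eqP/(implyP (Hf x) xG).
  by apply/forallP=> x; apply/implyP=> xG; apply/eqP; apply: Hf.
have sHS : H \subset stab G f.
  by apply/subsetP=> h hH; apply/stabP; split; [apply: (subsetP sHG) | apply: partI].
have tdec : forall i x, x \in G -> 
    (t i * x * (t (sigma i x))^-1)%g \in H /\
    (t i * x)%g = (t i * x * (t (sigma i x))^-1 * t (sigma i x))%g.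
  move=> i x xG; split; first by rewrite -mem_rcoset sig.
  by rewrite mulgKV.
have term : forall i x, x \in G ->
    pi (t i * x * (t (sigma i x))^-1)%g = fder f (t i) x.
  move=> i x xG; have [hH e] := tdec i x xG.
  have ft : f (t i) = 0 by rewrite -[t i]mul1g fdef ?group1.
  by rewrite /fder ft oppr0 add0r [in RHS]e fdef.
have sinj : forall x, x \in G -> injective (sigma^~ x).
  move=> x xG i j /= e; apply: tinj => /=; apply/rcoset_eqP.
  have := sig i x xG; have := sig j x xG; rewrite e !mem_rcoset => hj hi.
  have := groupM hi (groupVr hj).
  by rewrite !invMg invgK !mulgA mulgKV mulgK.
have tr2 : forall x y, x \in G -> y \in G ->
   \sum_(i < n) fder f (t i) (x * y)%g
   = \sum_(i < n) fder f (t i) x + \sum_(i < n) fder f (t i) y.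
  move=> x y xG yG.
  rewrite (eq_bigr (fun i => fder f (t i) x + fder f (t (sigma i x)) y)).
    by rewrite big_split /=; congr (_ + _); rewrite [RHS](reindex_inj (sinj x xG)).
  move=> i _; rewrite fder_split; congr (_ + _).
  have [hH e] := tdec i x xG; by rewrite e fH.
have gS : group_set (stab G f).
  apply/group_setP; split.
    apply/stabP; split; first exact: group1.
    by move=> x xG; rewrite /fder f1 oppr0 add0r mul1g.
  move=> a b /stabP [aG Ha] /stabP [bG Hb]; apply/stabP; split; first exact: groupM.
  move=> x xG; rewrite -fder_comp /fder -/(fder f a b) -/(fder f a (b * x)%g).
  by rewrite !Ha ?groupM // -/(fder f b x) Hb.
pose SG := Group gS.
pose F := fun g => restr G (fder f g).
have FeqP : forall a b, reflect {in G, fder f b =1 fder f a} (F b == F a).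
  move=> a b; apply: (iffP eqP) => [e z zG|e].
    by have := congr1 (fun F0 : {ffun gT -> A} => F0 z) e; rewrite /= !ffunE zG.
  by apply/ffunP => z; rewrite !ffunE; case: ifP => // /e.
have keyF : forall a b, a \in G -> b \in G -> (F b == F a) = ((b * a^-1)%g \in stab G f).
  move=> a b aG bG; apply/FeqP/stabP => [e|[_ e] x xG].
    split; first by rewrite groupM ?groupV.
    move=> x xG; rewrite -fder_comp /fder -/(fder f b a^-1) -/(fder f b (a^-1 * x)%g).
    rewrite !e ?groupM ?groupV // /fder mulgV mulKVg f1 addr0 opprK.
    by rewrite addNKr.
  rewrite -[b](mulgKV a) -fder_comp /fder -/(fder f (b * a^-1)%g a).
  by rewrite -/(fder f (b * a^-1)%g (a * x)%g) !e ?groupM.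
have sSG : stab G f \subset G by apply/subsetP => a /stabP [].
have cnt : forall a, a \in G -> #|[set i | F (t i) == F a]| = #|stab G f : H|%g.
  move=> a aG; set P := [set i | F (t i) == F a].
  have PE : forall i, (i \in P) = (t i \in (stab G f :* a)%g).
    by move=> i; rewrite inE keyF ?tG // mem_rcoset.
  have img : [set (p.1 * t p.2)%g | p in setX H P] = (stab G f :* a)%g.
    apply/setP => y; apply/imsetP/idP.
      case=> [[h i]] /setXP [/= hH]; rewrite PE mem_rcoset => iP ->.
      rewrite mem_rcoset -mulgA.
      exact: (@groupM _ SG h _ (subsetP sHS h hH) iP).
    move=> yS; have yG : y \in G.
      rewrite -[y](mulgKV a) groupM //; apply: (subsetP sSG).
      by rewrite -mem_rcoset.
    have [h hH [i ey]] := cosG y yG.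
    exists (h, i) => //; apply/setXP; split => //=.
    rewrite PE mem_rcoset; move: yS; rewrite mem_rcoset ey => hS.
    have := @groupM _ SG h^-1 _ (@groupVr _ SG _ (subsetP sHS h hH)) hS.
    by rewrite !mulgA mulVg mul1g.
  have inj : {in setX H P &, injective (fun p => (p.1 * t p.2)%g)}.
    move=> [h i] [h' j] /setXP [/= hH _] /setXP [/= h'H _] /= e.
    have ij : i = j.
      apply: tinj => /=; apply/rcoset_eqP; rewrite mem_rcoset.
      have -> : t i = (h^-1 * (h' * t j))%g by rewrite -e mulKg.
      by rewrite mulgA mulgK groupM ?groupV.
    by move: e; rewrite ij => /mulIg ->.
  have := card_in_imset inj; rewrite img card_rcoset cardsX.
  rewrite -(Lagrange (G:=SG) sHS) => /eqP; rewrite eqn_pmul2l ?cardG_gt0 //.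
  by move/eqP.
have avg : forall x, x \in G ->
    \sum_(i < n) fder f (t i) x = avgf G f x *+ #|stab G f : H|%g.
  move=> x xG; rewrite /avgf -/F; set s := undup _.
  have sin : forall i, F (t i) \in s.
    by move=> i; rewrite mem_undup; apply: map_f; rewrite mem_enum.
  rewrite (eq_bigr (fun i => \sum_(F0 <- s | F0 == F (t i)) F0 x)); last first.
    move=> i _; rewrite -big_filter filter_pred1_uniq ?undup_uniq //.
    by rewrite big_seq1 ffunE xG.
  rewrite (eq_bigr _ (fun i _ => big_mkcond _ _)) /= exchange_big /=.
  rewrite -sumrMnl big_seq [RHS]big_seq; apply: eq_bigr => F0 F0s.
  rewrite -big_mkcond sumr_const.
  move: F0s; rewrite mem_undup => /mapP [a]; rewrite mem_enum => aG ->.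
  rewrite -(cnt a aG); congr (_ *+ _); apply: eq_card => i; by rewrite inE eq_sym.
split; first by split.
split.
  by move=> x xG; split; [apply: eq_bigr => i _; apply: term | apply: avg].
move=> x y xG yG /=.
rewrite (eq_bigr _ (fun i _ => term i _ (groupM xG yG))).
rewrite (eq_bigr _ (fun i _ => term i _ xG)) (eq_bigr _ (fun i _ => term i _ yG)).
exact: tr2.
Qed.
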